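(* Let $\sigma$ be a (nonempty) input sequence of List Update with Time Windows and let $\sigma'$ be the sequence obtained from $\sigma$ by omitting all requests that are not triggering requests with respect to ALG run on $\sigma$. Then $$\frac{ALG(\sigma)}{OPT(\sigma)}\le\frac{ALG(\sigma')}{OPT(\sigma')}.$$
   Context: List Update with Time Windows. A set $\mathbb{E}$ of $n$ elements is kept in an ordered list (position $1$ is the head). An input $\sigma$ is a sequence of requests $r_1,\dots,r_m$; request $r_k$ specifies an element $e_k\in\mathbb{E}$, an arrival time $a_k$ and a deadline $q_k\ge a_k$. At any time an algorithm may (a) perform an access up to position $i$, at cost $i$, which serves every pending request (arrived and not yet served) whose element currently lies in positions $1,\dots,i$; (b) swap two adjacent elements at cost $1$. Actions are instantaneous. Every request must be served at some time in $[a_k,q_k]$. Cost = total access cost + number of swaps. $OPT(\sigma)$ is the minimum cost of an offline feasible solution from the same initial list. Algorithm ALG: whenever the current time equals the deadline of at least one pending request, let the triggering element be the element at the largest current position among those elements having a pending request whose deadline is the current time, and let $i$ be its position. ALG accesses the first $\min(2i-1,n)$ positions and then moves the triggering element to the front by $i-1$ adjacent swaps. At each such event, the triggering request is one (arbitrarily fixed) pending request for the triggering element whose deadline is the current time. A request of $\sigma$ is a triggering request (with respect to ALG) if it is the triggering request of some event of ALG on $\sigma$. *)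

(* Defs.v *)
From HB Require Import structures.
From Stdlib Require Import ClassicalEpsilon.
From mathcomp Require Import all_boot all_order all_algebra.
Set Implicit Arguments. Unset Strict Implicit. Unset Printing Implicit Defensive.
Import Order.TTheory GRing.Theory Num.Theory.
Local Open Scope ring_scope.

Section LUTW.
Variables (E : finType) (R : realDomainType).

(* A request: element, arrival time, deadline. *)
Record req := Req { relem : E; rarr : R; rdl : R }.

Definition req2t (r : req) : E * R * R := (relem r, rarr r, rdl r).
Definition t2req (x : E * R * R) : req := Req x.1.1 x.1.2 x.2.
Lemma req2tK : cancel req2t t2req. Proof. by case. Qed.
HB.instance Definition _ := Equality.copy req (can_type req2tK).

Definition indexed (s : seq req) : seq (nat * req) := zip (iota 0 (size s)) s.

(* Lists are sequences of elements; the item at 0-based index j is at  *)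
(* position j+1.                                                       *)
Inductive action := Acc of nat  (* access up to position i, cost i *)
                  | Swp of nat. (* swap items at positions j+1, j+2, cost 1 *)

Definition swap_at (j : nat) (L : seq E) : seq E :=
  take j L ++ rev (take 2 (drop j L)) ++ drop j.+2 L.

Definition apply_act (L : seq E) (a : action) : seq E :=
  match a with Acc _ => L | Swp j => swap_at j L end.

Definition act_cost (a : action) : nat :=
  match a with Acc i => i | Swp _ => 1 end%N.

Definition act_valid (n : nat) (a : action) : bool :=
  match a with Acc i => (0 < i <= n)%N | Swp j => (j.+2 <= n)%N end.

(* A schedule: a sequence of timed actions, performed in this order. *)
Definition schedule := seq (R * action).

Definition sched_cost (S : schedule) : nat := (\sum_(x <- S) act_cost x.2)%N.

Definition list_before (L0 : seq E) (S : schedule) (p : nat) : seq E :=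
  foldl apply_act L0 (take p (map snd S)).

Definition covers (L0 : seq E) (S : schedule) (r : req) (p : nat) : bool :=
  match nth (0, Acc 0%N) S p with
  | (t, Acc i) => (rarr r <= t) && (index (relem r) (list_before L0 S p) < i)%N
  | _ => false
  end.

(* r is served by the first action covering it (afterwards it is no longer
   pending); it must exist and happen no later than the deadline. *)
Definition served_in_time (L0 : seq E) (S : schedule) (r : req) : bool :=
  let p := find (covers L0 S r) (iota 0 (size S)) in
  (p < size S)%N && ((nth (0, Acc 0%N) S p).1 <= rdl r).

Definition feasible (L0 : seq E) (s : seq req) (S : schedule) : bool :=
  [&& sorted <=%R (map fst S),
      all (act_valid (size L0)) (map snd S)
    & all (served_in_time L0 S) s].

Record alg_state := AlgState {
  alist : seq E;
  aserved : seq nat;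
  acost : nat;
  aevents : seq (seq nat)    (* for each event, the indices of the pending
                                requests for the triggering element whose
                                deadline is the current time *)
}.

Definition alg_step (s : seq req) (st : alg_state) (t : R) : alg_state :=
  let L := alist st in
  let pend (p : nat * req) := (p.1 \notin aserved st) && (rarr p.2 <= t) in
  let due (p : nat * req) := pend p && (rdl p.2 == t) in
  if has due (indexed s) then
    (* 0-based index of the triggering element (position i = i0 + 1) *)
    let i0 := (\max_(p <- indexed s | due p) index (relem p.2) L)%N in
    let m := minn (2 * i0).+1 (size L) in   (* min(2i-1, n) *)
    let newly := [seq p.1 | p <- indexed s & pend p && (index (relem p.2) L < m)%N] in
    let cand := [seq p.1 | p <- indexed s & due p && (index (relem p.2) L == i0)] in
    AlgState (drop i0 (take i0.+1 L) ++ take i0 L ++ drop i0.+1 L)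
             (aserved st ++ newly) (acost st + m + i0)%N (rcons (aevents st) cand)
  else st.

(* ALG acts only at deadlines; these are processed in increasing order. *)
Definition deadlines (s : seq req) : seq R := sort <=%R (undup (map rdl s)).

Definition alg_run (L0 : seq E) (s : seq req) : alg_state :=
  foldl (alg_step s) (AlgState L0 [::] 0%N [::]) (deadlines s).

Definition ALG (L0 : seq E) (s : seq req) : nat := acost (alg_run L0 s).

(* trig is a valid choice of the triggering requests: one (arbitrary)
   candidate per event of ALG, listed in event order. *)
Definition triggering_choice (L0 : seq E) (s : seq req) (trig : seq nat) : bool :=
  all2 (fun k C => k \in C) trig (aevents (alg_run L0 s)).

Definition restrict (s : seq req) (trig : seq nat) : seq req :=
  [seq p.2 | p <- indexed s & p.1 \in trig].

Definition full_sched (L0 : seq E) (s : seq req) : schedule :=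
  [seq (t, Acc (size L0)) | t <- sort <=%R (map rdl s)].

Lemma foldl_acc (L : seq E) (xs : seq R) (m : nat) :
  foldl apply_act L [seq Acc m | _ <- xs] = L.
Proof. by elim: xs. Qed.

Lemma exists_feasible (L0 : seq E) (s : seq req) :
  perm_eq L0 (enum E) -> all (fun r => rarr r <= rdl r) s ->
  exists c, exists S, feasible L0 s S /\ sched_cost S = c.
Proof.
move=> hperm harr.
set l := sort <=%R (map rdl s).
have inL0 : forall e, e \in L0 by move=> e; rewrite (perm_mem hperm) mem_enum.
set S := [seq (t, Acc (size L0)) | t <- l].
exists (sched_cost S), S; split => //.
have fstS : map fst S = l by rewrite -map_comp map_id.
have sndS : map snd S = [seq Acc (size L0) | _ <- l] by rewrite -map_comp.
have szS : size S = size l by rewrite size_map.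
have nthS : forall p, (p < size l)%N -> nth (0, Acc 0%N) S p = (nth 0 l p, Acc (size L0)).
  by move=> p hp; rewrite (nth_map 0).
have lbS : forall p, list_before L0 S p = L0.
  by move=> p; rewrite /list_before sndS -map_take foldl_acc.
have lsort : sorted <=%R l by apply: sort_sorted; exact: le_total.
apply/and3P; split; first by rewrite fstS.
- rewrite sndS all_map; apply/allP => t tl /=.
  have : t \in map rdl s by rewrite -(mem_sort <=%R).
  case: (s) => // r _ _.
  by rewrite leqnn andbT (leq_ltn_trans (leq0n (index (relem r) L0))) // index_mem.
apply/allP => r rs.
have rl : rdl r \in l by rewrite mem_sort; apply: map_f.
set q := index (rdl r) l.
have ql : (q < size l)%N by rewrite index_mem.
have cq : covers L0 S r q.
  rewrite /covers nthS // nth_index // lbS (allP harr r rs) /=.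
  by rewrite index_mem.
set N := size S.
have hasc : has (covers L0 S r) (iota 0 N).
  by apply/hasP; exists q => //; rewrite mem_iota add0n /N szS.
set p := find (covers L0 S r) (iota 0 N).
have pq : (p <= q)%N.
  rewrite leqNgt; apply/negP => qp.
  have := before_find 0%N qp; rewrite nth_iota ?cq //.
  by rewrite /N szS (leq_trans ql).
have pl : (p < size l)%N by exact: leq_ltn_trans pq ql.
rewrite /served_in_time -/N -/p /N szS pl nthS //=.
have -> : rdl r = nth 0 l q by rewrite nth_index.
by apply: (sorted_leq_nth le_trans le_refl) => //; rewrite inE.
Qed.

Definition opt_pred (L0 : seq E) (s : seq req) : pred nat := fun c =>
  if excluded_middle_informative
       (exists S, feasible L0 s S /\ sched_cost S = c) then true else false.

(* OPT = least cost of a feasible solution (0 if there is none, which never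
   happens under the standing assumptions, cf. exists_feasible). *)
Definition OPT (L0 : seq E) (s : seq req) : nat :=
  match excluded_middle_informative (exists c, opt_pred L0 s c) with
  | left h => ex_minn h
  | right _ => 0%N
  end.

Lemma OPT_spec (L0 : seq E) (s : seq req) :
  perm_eq L0 (enum E) -> all (fun r => rarr r <= rdl r) s ->
  (exists S, feasible L0 s S /\ sched_cost S = OPT L0 s) /\
  (forall S, feasible L0 s S -> (OPT L0 s <= sched_cost S)%N).
Proof.
move=> hp ha; rewrite /OPT.
case: excluded_middle_informative => [h|hn]; last first.
  exfalso; apply: hn; have [c [S [hS hc]]] := exists_feasible hp ha.
  exists c; rewrite /opt_pred; case: excluded_middle_informative => // hn'.
  by exfalso; apply: hn'; exists S.
case: ex_minnP => m hm hmin; split.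
  by move: hm; rewrite /opt_pred; case: excluded_middle_informative.
move=> S hS; apply: hmin; rewrite /opt_pred.
case: excluded_middle_informative => // hn'.
by exfalso; apply: hn'; exists S.
Qed.

End LUTW.

(* Main.v *)
Require Import Defs.
From HB Require Import structures.
From mathcomp Require Import all_boot all_order all_algebra.
Import Order.TTheory GRing.Theory Num.Theory.
Set Implicit Arguments. Unset Strict Implicit. Unset Printing Implicit Defensive.

Lemma uniq_fst_inj (T : eqType) (ps : seq (nat * T)) p q :
  uniq (map fst ps) -> p \in ps -> q \in ps -> p.1 = q.1 -> p = q.
Proof.
elim: ps => //= a ps IH /andP[na u]; rewrite !inE.
case/orP=> [/eqP->|hp]; case/orP=> [/eqP->|hq] //= e.
- by move: na; rewrite e (map_f fst hq).
- by move: na; rewrite -e (map_f fst hp).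
- exact: IH.
Qed.

Lemma mem_filter_fst (T : eqType) (ps : seq (nat * T)) (P : pred (nat * T)) p :
  uniq (map fst ps) -> p \in ps -> (p.1 \in [seq q.1 | q <- ps & P q]) = P p.
Proof.
move=> u hp; apply/idP/idP.
- by case/mapP=> q; rewrite mem_filter => /andP[Pq hq] e; rewrite (uniq_fst_inj u hp hq e).
- by move=> Pp; apply: map_f; rewrite mem_filter Pp.
Qed.

Section Sim.
Variables (R : realDomainType) (E : finType) (s : seq (req E R)) (trig : seq nat).
Local Open Scope ring_scope.

Definition fs := [seq p <- Defs.indexed s | p.1 \in trig].
Definition s' := restrict s trig.

Definition stat (st : alg_state E) (p : nat * req E R) := (p.1 \notin aserved st, p.2).

Definition rel (st st' : alg_state E) :=
  [/\ alist st = alist st', acost st = acost st' &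
      map (stat st') (Defs.indexed s') = map (stat st) fs].

Lemma uniq_indexed (u : seq (req E R)) : uniq (map fst (Defs.indexed u)).
Proof. by rewrite /Defs.indexed -/(unzip1 _) unzip1_zip ?size_iota // iota_uniq. Qed.

Lemma snd_indexed (u : seq (req E R)) : map snd (Defs.indexed u) = u.
Proof. by rewrite /Defs.indexed -/(unzip2 _) unzip2_zip ?size_iota. Qed.

Definition duex t (x : bool * req E R) := (x.1 && (rarr x.2 <= t)) && (rdl x.2 == t).
Definition upd (L : seq E) t m (x : bool * req E R) :=
  (x.1 && ~~ ((x.1 && (rarr x.2 <= t)) && (index (relem x.2) L < m)%N), x.2).

Lemma step_stat (u : seq (req E R)) st t : has (fun p => duex t (stat st p)) (Defs.indexed u) ->
  let L := alist st in
  let i0 := (\max_(x <- map (stat st) (Defs.indexed u) | duex t x) index (relem x.2) L)%N in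
  let m := minn (2 * i0).+1 (size L) in
  [/\ alist (alg_step u st t) = drop i0 (take i0.+1 L) ++ take i0 L ++ drop i0.+1 L,
      acost (alg_step u st t) = (acost st + m + i0)%N &
      map (stat (alg_step u st t)) (Defs.indexed u) = map (upd L t m) (map (stat st) (Defs.indexed u))].
Proof.
move=> hd L i0 m; rewrite /alg_step hd /=.
have ei : (\max_(p <- Defs.indexed u | duex t (stat st p)) index (relem p.2) (alist st))%N = i0.
  by rewrite /i0 big_map.
rewrite ei; split => //.
rewrite -map_comp; apply/eq_in_map => p hp /=.
rewrite /stat /upd /= mem_cat negb_or.
by rewrite (mem_filter_fst _ (uniq_indexed u) hp).
Qed.

Lemma step_nodue (u : seq (req E R)) st t : ~~ has (fun p => duex t (stat st p)) (Defs.indexed u) ->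
  alg_step u st t = st.
Proof. by rewrite /alg_step => /negbTE ->. Qed.


Lemma fs_sub p : p \in fs -> p \in Defs.indexed s.
Proof. by rewrite mem_filter => /andP[]. Qed.

Lemma step_rel st st' t : rel st st' ->
  (forall C, C \in aevents (alg_step s st t) -> has (mem trig) C) ->
  rel (alg_step s st t) (alg_step s' st' t).
Proof.
case=> eL eC eS hev.
have hd' : has (fun p => duex t (stat st' p)) (Defs.indexed s') =
           has (fun p => duex t (stat st p)) fs.
  transitivity (has (duex t) (map (stat st') (Defs.indexed s'))); first by rewrite has_map.
  by rewrite eS has_map.
case: (boolP (has (fun p => duex t (stat st p)) (Defs.indexed s))) => hd; last first.
  have hd2 : ~~ has (fun p => duex t (stat st' p)) (Defs.indexed s').
    rewrite hd'; apply: contra hd => /hasP[p /fs_sub hp dp]; apply/hasP; by exists p.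
  by rewrite (step_nodue hd) (step_nodue hd2).
have [eL1 eC1 eS1] := step_stat hd.
set L := alist st in eL1 eC1 eS1.
set i0 := (\max_(x <- _ | duex t x) _)%N in eL1 eC1 eS1.
have [p hp [dp ip tp]] : exists2 p, p \in Defs.indexed s &
    [/\ duex t (stat st p), index (relem p.2) L = i0 & p.1 \in trig].
  have : [seq p.1 | p <- Defs.indexed s & (p.1 \notin aserved st) && (rarr p.2 <= t) &&
            (rdl p.2 == t) && (index (relem p.2) (alist st) == i0)] \in aevents (alg_step s st t).
    rewrite /alg_step hd /= -/L.
    have -> : (\max_(p <- Defs.indexed s | (p.1 \notin aserved st) && (rarr p.2 <= t)%R && (rdl p.2 == t))
       index (relem p.2) L)%N = i0 by rewrite /i0 big_map.
    by rewrite mem_rcons inE eqxx.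
  move/hev/hasP=> [k hk kt]; case/mapP: hk => p; rewrite mem_filter => /andP[/andP[dp /eqP ip] hp] ek.
  by exists p => //; split => //; rewrite -ek.
have pf : p \in fs by rewrite mem_filter tp hp.
have hd2 : has (fun p => duex t (stat st' p)) (Defs.indexed s').
  by rewrite hd'; apply/hasP; exists p.
have [eL2 eC2 eS2] := step_stat hd2.
have ei : (\max_(x <- map (stat st') (Defs.indexed s') | duex t x) index (relem x.2) (alist st'))%N = i0.
  rewrite eS -eL; apply/eqP; rewrite eqn_leq; apply/andP; split.
    apply/bigmax_leqP_seq => x /mapP[q /fs_sub hq ->] dq.
    exact: (@leq_bigmax_seq _ (map (stat st) (Defs.indexed s)) (duex t) (fun x => index (relem x.2) L) (stat st q) (map_f _ hq) dq).
  rewrite -ip.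
  have := (@leq_bigmax_seq _ (map (stat st) fs) (duex t) (fun x => index (relem x.2) L) (stat st p) (map_f _ pf) dp).
  by [].
rewrite ei -eL in eL2 eC2 eS2.
split.
- by rewrite eL1 eL2.
- by rewrite eC1 eC2 eC.
- rewrite eS2 eS -map_comp; apply/eq_in_map => q hq /=.
  by move: eS1; rewrite -map_comp => /eq_in_map/(_ q (fs_sub hq)) ->.
Qed.


Lemma events_mono xs st C : C \in aevents st -> C \in aevents (foldl (alg_step s) st xs).
Proof.
elim: xs st => //= t xs IH st hC; apply: IH.
rewrite /alg_step; case: ifP => // _ /=; by rewrite mem_rcons inE hC orbT.
Qed.

Lemma sim xs st st' : rel st st' ->
  (forall C, C \in aevents (foldl (alg_step s) st xs) -> has (mem trig) C) ->
  acost (foldl (alg_step s) st xs) = acost (foldl (alg_step s') st' xs).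
Proof.
elim: xs st st' => [|t xs IH] st st' /= hr hev; first by case: hr.
apply: IH => //; apply: step_rel => // C hC; apply: hev; exact: events_mono.
Qed.

Lemma foldl_filter (A B : Type) (f : A -> B -> A) (P : pred B) x xs :
  (forall y t, ~~ P t -> f y t = y) -> foldl f x xs = foldl f x (filter P xs).
Proof.
move=> h; elim: xs x => //= t xs IH x; case: ifP => //= /negbT /h ->; exact: IH.
Qed.

Lemma s'_sub r : r \in s' -> r \in s.
Proof.
case/mapP=> p /fs_sub hp ->; rewrite -[X in _ \in X](snd_indexed s); exact: map_f.
Qed.

Lemma deadlines_restrict st :
  foldl (alg_step s') st (deadlines s) = foldl (alg_step s') st (deadlines s').
Proof.
rewrite (@foldl_filter _ _ _ (mem (map (@rdl _ _) s'))); last first.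
  move=> y t nt; apply: step_nodue; apply/hasP=> -[p hp].
  rewrite /duex => /andP[_ /eqP et]; move: nt; rewrite -et /=.
  rewrite -{1}(snd_indexed s') -map_comp; by rewrite (map_f _ hp).
congr foldl; apply: lt_sorted_eq.
- by apply: lt_sorted_filter; rewrite /deadlines sort_lt_sorted undup_uniq.
- by rewrite /deadlines sort_lt_sorted undup_uniq.
move=> t; rewrite mem_filter /deadlines !mem_sort !mem_undup /=.
case: (boolP (t \in map (@rdl _ _) s')) => //= /mapP[r /s'_sub hr ->]; exact: map_f.
Qed.

End Sim.

Lemma all2_has (tr : seq nat) (ev : seq (seq nat)) :
  all2 (fun k C => k \in C) tr ev -> forall C, C \in ev -> has (mem tr) C.
Proof.
elim: tr ev => [|k tr IH] [|C0 ev] //= /andP[kC h] C; rewrite inE => /orP[/eqP->|hC].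
  by apply/hasP; exists k => //; apply: mem_head.
by apply: sub_has (IH _ h _ hC) => x /= hx; apply: mem_behead.
Qed.

Lemma ALG_restrict (R : realDomainType) (E : finType) (L0 : seq E)
    (s : seq (req E R)) (trig : seq nat) :
  triggering_choice L0 s trig -> ALG L0 (restrict s trig) = ALG L0 s.
Proof.
move=> htc; rewrite /ALG /alg_run.
rewrite -(deadlines_restrict s trig) -/(s' s trig).
symmetry; apply: sim.
  have e1 : forall ps : seq (nat * req E R), map (stat (AlgState L0 [::] 0%N [::])) ps = map (fun r => (true, r)) (map snd ps).
    by move=> ps; rewrite -map_comp; apply/eq_map => p; rewrite /stat in_nil.
  by split => //; rewrite !e1 snd_indexed.
exact: all2_has htc.
Qed.

Lemma feasible_sub (R : realDomainType) (E : finType) (L0 : seq E)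
    (s u : seq (req E R)) S :
  {subset u <= s} -> feasible L0 s S -> feasible L0 u S.
Proof.
move=> hsub /and3P[h1 h2 /allP h3]; apply/and3P; split => //.
by apply/allP => r /hsub /h3.
Qed.

Lemma feasible_pos (R : realDomainType) (E : finType) (L0 : seq E)
    (s : seq (req E R)) S : s != [::] -> feasible L0 s S -> (0 < sched_cost S)%N.
Proof.
case: s => // r s _ /and3P[_ _ /= /andP[hr _]].
move: hr; rewrite /served_in_time.
set p := find _ _ => /andP[hp _].
have : covers L0 S r (nth 0%N (iota 0 (size S)) p).
  by apply: nth_find; rewrite has_find size_iota.
rewrite nth_iota // add0n /covers.
case e: (nth _ S p) => [t [i|j]] // /andP[_ hi].
rewrite lt0n /sched_cost sum_nat_seq_neq0; apply/(has_nthP (0%R, Acc 0%N)).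
exists p => //.
by rewrite e /= -lt0n (leq_ltn_trans _ hi).
Qed.

Local Open Scope ring_scope.
Theorem mainTheorem3 (R : realDomainType) (E : finType) (L0 : seq E)
    (s : seq (req E R)) (trig : seq nat) :
  perm_eq L0 (enum E) ->
  s != [::] ->
  all (fun r => rarr r <= rdl r) s ->
  triggering_choice L0 s trig ->
  (ALG L0 s)%:R / (OPT L0 s)%:R
    <= (ALG L0 (restrict s trig))%:R / (OPT L0 (restrict s trig))%:R :> rat.
Proof.
move=> hp _ ha htc.
rewrite (ALG_restrict htc).
set s2 := restrict s trig.
have hsub : {subset s2 <= s} := @s'_sub _ _ s trig.
have ha2 : all (fun r => rarr r <= rdl r) s2 by apply/allP => r /hsub /(allP ha).
have [[S [hS cS]] _] := OPT_spec hp ha.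
have [[S2 [hS2 cS2]] hmin2] := OPT_spec hp ha2.
have le : (OPT L0 s2 <= OPT L0 s)%N by rewrite -cS; apply: hmin2; exact: feasible_sub hsub hS.
case: (eqVneq s2 [::]) => [e|ne].
  rewrite -(ALG_restrict htc) -/s2 e.
  have -> : ALG L0 ([::] : seq (req E R)) = 0%N by [].
  by rewrite !mul0r.
have pos2 : (0 < OPT L0 s2)%N by rewrite -cS2; exact: feasible_pos ne hS2.
apply: ler_wpM2l => //.
by rewrite lef_pV2 ?posrE ?ltr0n ?ler_nat // (leq_trans pos2 le).
Qed.
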